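(* Let $M$ be a duplicial module in a pre-additive category, $n\ge1$, $1\le k\le n$, and $0\le i_k<i_{k-1}<\cdots<i_1<n$. Then, as morphisms $M_{n-k}\to M_n$, $$\kappa_n\, s_{n-1,i_1}s_{n-2,i_2}\cdots s_{n-k,i_k}=\begin{cases}0,& i_k=0,\\ (-1)^k\, s_{n-1,i_1-1}s_{n-2,i_2-1}\cdots s_{n-k,i_k-1}\,\kappa_{n-k},& i_k\ge1.\end{cases}$$
   Context: Let $\mathcal A$ be a pre-additive category. Let $\Lambda_+$ be the category with objects $[n]$, $n\ge0$, where $\Lambda_+([m],[n])$ is the set of weakly monotone $f:\mathbb Z\to\mathbb Z$ with $f(j+m+1)=f(j)+n+1$ for all $j$ and $f(0)\ge0$. Define $\varepsilon^n_i:[n-1]\to[n]$ ($n\ge1$, $0\le i\le n$) by $\varepsilon^n_i(j)=j$ for $0\le j<i$, $j+1$ for $i\le j\le n-1$, and $\eta^n_i:[n+1]\to[n]$ ($0\le i\le n+1$) by $\eta^n_i(j)=j$ for $0\le j\le i$, $j-1$ for $i<j\le n+1$. A duplicial module is a functor $M:\Lambda_+^{op}\to\mathcal A$; $M_n=M([n])$, $\partial_{n,i}=M(\varepsilon^n_i):M_n\to M_{n-1}$, $s_{n,i}=M(\eta^n_i):M_n\to M_{n+1}$. Convention $M_{-1}=0$, maps into/out of it zero. The Karoubi operator is $\kappa_n=(-1)^n(\partial_{n+1,0}s_{n,n+1}-s_{n-1,n}\partial_{n,0}):M_n\to M_n$ (so $\kappa_0=\partial_{1,0}s_{0,1}$).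 *)

(* Defs.v *)
From Stdlib Require Import ZArith Lia.
From HB Require Import structures.
From mathcomp Require Import all_boot all_order all_algebra.
Set Implicit Arguments. Unset Strict Implicit. Unset Printing Implicit Defensive.
Import GRing.Theory.
Delimit Scope Z_scope with ZZ.

Record preadditive := PreAdditive {
  Ob : Type;
  Hom : Ob -> Ob -> zmodType;
  idm : forall a, Hom a a;
  mcomp : forall a b c, Hom b c -> Hom a b -> Hom a c;
  compA : forall a b c d (f : Hom c d) (g : Hom b c) (h : Hom a b),
      mcomp f (mcomp g h) = mcomp (mcomp f g) h;
  comp1f : forall a b (f : Hom a b), mcomp (idm b) f = f;
  compf1 : forall a b (f : Hom a b), mcomp f (idm a) = f;
  compDl : forall a b c (f g : Hom b c) (h : Hom a b),
      mcomp (f + g)%R h = (mcomp f h + mcomp g h)%R;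
  compDr : forall a b c (f : Hom b c) (g h : Hom a b),
      mcomp f (g + h)%R = (mcomp f g + mcomp f h)%R
}.
Arguments idm {C} a : rename.
Arguments mcomp {C a b c} : rename.

(* The category Lambda_+ : objects [n], n : nat; morphisms [m] -> [n] *)
(* are weakly monotone f : Z -> Z with f (j+m+1) = f j + n+1, f 0 >= 0 *)
Definition isLam (m n : nat) (f : Z -> Z) : Prop :=
  (forall x y : Z, (x <= y)%ZZ -> (f x <= f y)%ZZ) /\
  (forall j : Z, f (j + Z.of_nat m + 1)%ZZ = (f j + Z.of_nat n + 1)%ZZ) /\
  (0 <= f 0%ZZ)%ZZ.

Definition Lam (m n : nat) := {f : Z -> Z | isLam m n f}.

Lemma isLam_id n : isLam n n (fun j => j).
Proof. split; [|split]; intros; lia. Qed.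

Lemma isLam_comp m n p (f : Z -> Z) (g : Z -> Z) :
  isLam m n f -> isLam n p g -> isLam m p (fun j => g (f j)).
Proof.
move=> [fm [fp f0]] [gm [gp g0]]; split; [|split].
- by move=> x y /fm /gm.
- by move=> j; rewrite fp gp.
- have := gm _ _ f0; lia.
Qed.

Definition lam_id n : Lam n n := exist _ _ (isLam_id n).
Definition lam_comp m n p (g : Lam n p) (f : Lam m n) : Lam m p :=
  exist _ _ (isLam_comp (proj2_sig f) (proj2_sig g)).

(* eps_fun n i = epsilon^{n+1}_i : [n] -> [n+1]; on one period,
   j |-> j for 0 <= j < i and j |-> j+1 for i <= j <= n
   (closed form j + 1 + floor((j-i)/(n+1)); i is clamped to <= n+1). *)
Definition eps_fun (n i : nat) (j : Z) : Z :=
  (j + 1 + (j - Z.of_nat (minn i n.+1)) / Z.of_nat n.+1)%ZZ.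

(* eta_fun n i = eta^n_i : [n+1] -> [n]; on one period,
   j |-> j for 0 <= j <= i and j |-> j-1 for i < j <= n+1
   (closed form j - 1 - floor((j-i-1)/(n+2))). *)
Definition eta_fun (n i : nat) (j : Z) : Z :=
  (j - 1 - (j - Z.of_nat i - 1) / Z.of_nat n.+2)%ZZ.

Lemma isLam_eps n i : isLam n n.+1 (eps_fun n i).
Proof.
rewrite /eps_fun.
set c := Z.of_nat (minn i n.+1); set N := Z.of_nat n.+1.
have HN : (0 < N)%ZZ by rewrite /N; lia.
have Hc : (0 <= c <= N)%ZZ.
  rewrite /c /N; split; [lia|]; apply: inj_le; apply/leP; exact: geq_minr.
split; [|split].
- move=> x y Hxy.
  have : ((x - c) / N <= (y - c) / N)%ZZ by apply: Z.div_le_mono; lia.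
  lia.
- move=> j.
  have -> : (j + Z.of_nat n + 1 - c = (j - c) + 1 * N)%ZZ by rewrite /N; lia.
  rewrite Z_div_plus_full; last lia.
  rewrite /N; lia.
- have : ((-1 * N) / N <= (0 - c) / N)%ZZ by apply: Z.div_le_mono; lia.
  rewrite Z_div_mult; lia.
Qed.

Lemma isLam_eta n i : isLam n.+1 n (eta_fun n i).
Proof.
rewrite /eta_fun.
set c := Z.of_nat i; set P := Z.of_nat n.+2.
have HP : (1 <= P)%ZZ by rewrite /P; lia.
have Hc : (0 <= c)%ZZ by rewrite /c; lia.
split; [|split].
- move=> x y Hxy.
  have H1 : ((y - c - 1) / P <= ((x - c - 1) + (y - x) * P) / P)%ZZ.
    apply: Z.div_le_mono; nia.
  rewrite Z_div_plus_full in H1; lia.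
- move=> j.
  have -> : (j + Z.of_nat n.+1 + 1 - c - 1 = (j - c - 1) + 1 * P)%ZZ
    by rewrite /P; lia.
  rewrite Z_div_plus_full; last lia.
  rewrite /P; lia.
- have : ((0 - c - 1) / P < 0)%ZZ.
    apply: Z.div_lt_upper_bound; lia.
  lia.
Qed.

Definition lam_eps n i : Lam n n.+1 := exist _ _ (isLam_eps n i).
Definition lam_eta n i : Lam n.+1 n := exist _ _ (isLam_eta n i).

Lemma eps_funE n i (j : nat) : (i <= n.+1)%N -> (j <= n)%N ->
  eps_fun n i (Z.of_nat j) = Z.of_nat (if (j < i)%N then j else j.+1).
Proof.
move=> Hi Hj; rewrite /eps_fun (minn_idPl Hi).
case: ifP => Hji.
- have -> : ((Z.of_nat j - Z.of_nat i) / Z.of_nat n.+1 = -1)%ZZ.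
    symmetry; apply: (Z.div_unique_pos _ _ _ (Z.of_nat j - Z.of_nat i + Z.of_nat n.+1)%ZZ);
      move/ltP: Hji; move/leP: Hi; lia.
  lia.
- have -> : ((Z.of_nat j - Z.of_nat i) / Z.of_nat n.+1 = 0)%ZZ.
    apply: Z.div_small; move/negbT: Hji; rewrite -leqNgt => /leP; move/leP: Hj; lia.
  lia.
Qed.

Lemma eta_funE n i (j : nat) : (i <= n.+1)%N -> (j <= n.+1)%N ->
  eta_fun n i (Z.of_nat j) = Z.of_nat (if (j <= i)%N then j else j.-1).
Proof.
move=> Hi Hj; rewrite /eta_fun.
case: ifP => Hji.
- have -> : ((Z.of_nat j - Z.of_nat i - 1) / Z.of_nat n.+2 = -1)%ZZ.
    symmetry; apply: (Z.div_unique_pos _ _ _ (Z.of_nat j - Z.of_nat i - 1 + Z.of_nat n.+2)%ZZ);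
      move/leP: Hji; move/leP: Hj; move/leP: Hi; lia.
  lia.
- have -> : ((Z.of_nat j - Z.of_nat i - 1) / Z.of_nat n.+2 = 0)%ZZ.
    apply: Z.div_small; move/negbT: Hji; rewrite -ltnNge => /leP; move/leP: Hj; lia.
  move/negbT: Hji; rewrite -ltnNge => Hij.
  have Hj0 : (0 < j)%N by apply: leq_ltn_trans Hij.
  have := Nat2Z.inj_pred j; move/ltP: Hj0; lia.
Qed.

(* Duplicial modules: functors Lambda_+^op -> C.                      *)
Record duplicial (C : preadditive) := Duplicial {
  Mob : nat -> Ob C;
  Mmor : forall m n, Lam m n -> @Hom C (Mob n) (Mob m);
  Mmor_id : forall n, Mmor (lam_id n) = idm (Mob n);
  Mmor_comp : forall m n p (f : Lam m n) (g : Lam n p),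
      Mmor (lam_comp g f) = mcomp (Mmor f) (Mmor g)
}.
Arguments Mob {C} M n : rename.
Arguments Mmor {C} M {m n} f : rename.

Section Ops.
Variables (C : preadditive) (M : duplicial C).

Definition face (n i : nat) : @Hom C (Mob M n.+1) (Mob M n) := Mmor M (lam_eps n i).
Definition degen (n i : nat) : @Hom C (Mob M n) (Mob M n.+1) := Mmor M (lam_eta n i).

(* Karoubi operator kappa_n = (-1)^n (d_{n+1,0} s_{n,n+1} - s_{n-1,n} d_{n,0}),
   with the second term zero for n = 0 (M_{-1} = 0). *)
Definition kappa (n : nat) : @Hom C (Mob M n) (Mob M n) :=
  match n with
  | 0 => mcomp (face 0 0) (degen 0 1)
  | n'.+1 => ((mcomp (face n'.+1 0) (degen n'.+1 n'.+2)
              - mcomp (degen n' n'.+1) (face n' 0)) *~ ((-1) ^+ n'.+1))%R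
  end.

(* degen_chain f m [:: i_1; ...; i_k]
   = s_{k-1+m, f i_1} s_{k-2+m, f i_2} ... s_{m, f i_k} : M_m -> M_{k+m} *)
Fixpoint degen_chain (f : nat -> nat) (m : nat) (l : seq nat)
  : @Hom C (Mob M m) (Mob M (size l + m)) :=
  match l return @Hom C (Mob M m) (Mob M (size l + m)) with
  | [::] => idm (Mob M m)
  | i :: l' => mcomp (degen (size l' + m) (f i)) (degen_chain f m l')
  end.
End Ops.

(* Main.v *)
Require Import Defs.
From Stdlib Require Import ZArith Lia FunctionalExtensionality ProofIrrelevance.
From mathcomp Require Import all_boot all_order all_algebra.
Module ArithM.

Local Open Scope Z_scope.

Lemma decompZ (N z : Z) : 0 < N -> exists q r, z = q * N + r /\ 0 <= r < N.
Proof.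
move=> HN; exists (z / N), (z mod N); split.
- rewrite Z.mul_comm; apply Z.div_mod; lia.
- apply Z.mod_pos_bound; lia.
Qed.

Lemma eta_specE n i z q r : z = q * (Z.of_nat n + 2) + r ->
  Z.of_nat i <= Z.of_nat n + 1 -> 0 <= r <= Z.of_nat n + 1 ->
  eta_fun n i z = q * (Z.of_nat n + 1) + (if r <=? Z.of_nat i then r else r - 1).
Proof.
move=> -> Hi Hr; rewrite /eta_fun.
have -> : Z.of_nat n.+2 = Z.of_nat n + 2 by lia.
have -> : q * (Z.of_nat n + 2) + r - Z.of_nat i - 1 = (r - Z.of_nat i - 1) + q * (Z.of_nat n + 2) by ring.
rewrite Z_div_plus_full; last lia.
destruct (Z.leb_spec r (Z.of_nat i)) as [H|H].
- have -> : (r - Z.of_nat i - 1) / (Z.of_nat n + 2) = -1.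
    symmetry; apply: (Z.div_unique_pos _ _ _ (r - Z.of_nat i - 1 + (Z.of_nat n + 2))); lia.
  nia.
- rewrite (Z.div_small (r - Z.of_nat i - 1)); nia.
Qed.

Lemma eps_specE n i z q r : z = q * (Z.of_nat n + 1) + r ->
  (i <= n.+1)%N -> 0 <= r <= Z.of_nat n ->
  eps_fun n i z = q * (Z.of_nat n + 2) + (if r <? Z.of_nat i then r else r + 1).
Proof.
move=> -> Hi Hr; rewrite /eps_fun (minn_idPl Hi).
have -> : Z.of_nat n.+1 = Z.of_nat n + 1 by lia.
have -> : q * (Z.of_nat n + 1) + r - Z.of_nat i = (r - Z.of_nat i) + q * (Z.of_nat n + 1) by ring.
rewrite Z_div_plus_full; last lia.
have Hi' : Z.of_nat i <= Z.of_nat n + 1 by move/leP: Hi; lia.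
destruct (Z.ltb_spec r (Z.of_nat i)) as [H|H].
- have -> : (r - Z.of_nat i) / (Z.of_nat n + 1) = -1.
    symmetry; apply: (Z.div_unique_pos _ _ _ (r - Z.of_nat i + (Z.of_nat n + 1))); lia.
  nia.
- rewrite (Z.div_small (r - Z.of_nat i)); nia.
Qed.

Lemma funA p i z : (i <= p)%N ->
  eta_fun p i (eta_fun p.+1 p.+2 z) = eta_fun p p.+1 (eta_fun p.+1 i z).
Proof.
move=> /leP Hi.
have [q [r [Hz Hr]]] := @decompZ (Z.of_nat p + 3) z ltac:(lia).
rewrite (@eta_specE p.+1 p.+2 z q r); [|nia|lia|lia].
rewrite (@eta_specE p.+1 i z q r); [|nia|lia|lia].
destruct (Z.leb_spec r (Z.of_nat p.+2)) as [H1|H1]; [|lia].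
destruct (Z.leb_spec r (Z.of_nat i)) as [H2|H2].
- rewrite (@eta_specE p i _ q r); [|nia|lia|lia].
  rewrite (@eta_specE p p.+1 _ q r); [|nia|lia|lia].
  destruct (Z.leb_spec r (Z.of_nat i)); [|lia].
  destruct (Z.leb_spec r (Z.of_nat p.+1)); lia.
- destruct (Z.leb_spec r (Z.of_nat p + 1)) as [H3|H3].
  + rewrite (@eta_specE p i _ q r); [|nia|lia|lia].
    rewrite (@eta_specE p p.+1 _ q (r-1)); [|nia|lia|lia].
    destruct (Z.leb_spec r (Z.of_nat i)); [lia|].
    destruct (Z.leb_spec (r-1) (Z.of_nat p.+1)); lia.
  + rewrite (@eta_specE p i _ (q+1) 0); [|nia|lia|lia].
    rewrite (@eta_specE p p.+1 _ q (r-1)); [|nia|lia|lia].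
    destruct (Z.leb_spec 0 (Z.of_nat i)); [|lia].
    destruct (Z.leb_spec (r-1) (Z.of_nat p.+1)); nia.
Qed.

Lemma funB p z : eta_fun p 0 (eps_fun p 0 z) = z.
Proof.
have [q [r [Hz Hr]]] := @decompZ (Z.of_nat p + 1) z ltac:(lia).
rewrite (@eps_specE p 0 z q r); [|nia|done|lia].
destruct (Z.ltb_spec r (Z.of_nat 0)); [lia|].
rewrite (@eta_specE p 0 _ q (r+1)); [|nia|lia|lia].
destruct (Z.leb_spec (r+1) (Z.of_nat 0)); nia.
Qed.

Lemma funC p i z : (1 <= i <= p.+1)%N ->
  eta_fun p.+1 i (eps_fun p.+1 0 z) = eps_fun p 0 (eta_fun p i.-1 z).
Proof.
move=> /andP [/leP H1 /leP H2].
have [q [r [Hz Hr]]] := @decompZ (Z.of_nat p + 2) z ltac:(lia).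
rewrite (@eps_specE p.+1 0 z q r); [|nia|done|lia].
destruct (Z.ltb_spec r (Z.of_nat 0)); [lia|].
rewrite (@eta_specE p.+1 i _ q (r+1)); [|nia|lia|lia].
rewrite (@eta_specE p i.-1 z q r); [|nia|lia|lia].
destruct (Z.leb_spec r (Z.of_nat i.-1)) as [H3|H3].
- rewrite (@eps_specE p 0 _ q r); [|nia|done|lia].
  destruct (Z.ltb_spec r (Z.of_nat 0)); [lia|].
  destruct (Z.leb_spec (r+1) (Z.of_nat i)); lia.
- rewrite (@eps_specE p 0 _ q (r-1)); [|nia|done|lia].
  destruct (Z.ltb_spec (r-1) (Z.of_nat 0)); [lia|].
  destruct (Z.leb_spec (r+1) (Z.of_nat i)); lia.
Qed.
End ArithM.
Import ArithM.
Module CatM.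
Import GRing.Theory.

Section Cat.
Variables (C : preadditive) (M : duplicial C).

Lemma Mmor_ext m n (f g : Lam m n) : (forall z, proj1_sig f z = proj1_sig g z) -> Mmor M f = Mmor M g.
Proof.
move=> H; have -> // : f = g.
case: f g H => [f Hf] [g Hg] /= H.
have E : f = g := functional_extensionality _ _ H. subst g.
by rewrite (proof_irrelevance _ Hf Hg).
Qed.

Lemma idA p i : (i <= p)%N ->
  mcomp (degen M p.+1 p.+2) (degen M p i) = mcomp (degen M p.+1 i) (degen M p p.+1).
Proof. move=> Hi; rewrite /degen -!Mmor_comp; apply: Mmor_ext => z /=; exact: funA. Qed.

Lemma idB p : mcomp (face M p 0) (degen M p 0) = idm (Mob M p).
Proof. rewrite /degen /face -Mmor_comp -Mmor_id; apply: Mmor_ext => z /=; exact: funB. Qed.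

Lemma idC p i : (1 <= i <= p.+1)%N ->
  mcomp (face M p.+1 0) (degen M p.+1 i) = mcomp (degen M p i.-1) (face M p 0).
Proof. move=> Hi; rewrite /degen /face -!Mmor_comp; apply: Mmor_ext => z /=; exact: funC. Qed.

Local Open Scope ring_scope.

Lemma comp0l a b c (h : Defs.Hom (p:=C) a b) : mcomp (0 : Defs.Hom (p:=C) b c) h = 0.
Proof. have H : mcomp (0 : Defs.Hom (p:=C) b c) h = mcomp 0 h + mcomp 0 h by rewrite -compDl addr0.
by apply: (addrI (mcomp (0 : Defs.Hom (p:=C) b c) h)); rewrite -H addr0. Qed.
Lemma comp0r a b c (f : Defs.Hom (p:=C) b c) : mcomp f (0 : Defs.Hom (p:=C) a b) = 0.
Proof. have H : mcomp f (0 : Defs.Hom (p:=C) a b) = mcomp f 0 + mcomp f 0 by rewrite -compDr addr0.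
by apply: (addrI (mcomp f (0 : Defs.Hom (p:=C) a b))); rewrite -H addr0. Qed.
Lemma compNl a b c (f : Defs.Hom (p:=C) b c) (h : Defs.Hom (p:=C) a b) : mcomp (- f) h = - mcomp f h.
Proof. by apply/eqP; rewrite -subr_eq0 opprK -compDl addNr comp0l. Qed.
Lemma compNr a b c (f : Defs.Hom (p:=C) b c) (h : Defs.Hom (p:=C) a b) : mcomp f (- h) = - mcomp f h.
Proof. by apply/eqP; rewrite -subr_eq0 opprK -compDr addNr comp0r. Qed.
Lemma compBl a b c (f g : Defs.Hom (p:=C) b c) (h : Defs.Hom (p:=C) a b) : mcomp (f - g) h = mcomp f h - mcomp g h.
Proof. by rewrite compDl compNl. Qed.
Lemma compBr a b c (f : Defs.Hom (p:=C) b c) (g h : Defs.Hom (p:=C) a b) : mcomp f (g - h) = mcomp f g - mcomp f h.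
Proof. by rewrite compDr compNr. Qed.
Lemma compMnl a b c (f : Defs.Hom (p:=C) b c) (h : Defs.Hom (p:=C) a b) n : mcomp (f *+ n) h = mcomp f h *+ n.
Proof. by elim: n => [|n IH]; rewrite ?comp0l // !mulrS compDl IH. Qed.
Lemma compMnr a b c (f : Defs.Hom (p:=C) b c) (h : Defs.Hom (p:=C) a b) n : mcomp f (h *+ n) = mcomp f h *+ n.
Proof. by elim: n => [|n IH]; rewrite ?comp0r // !mulrS compDr IH. Qed.
Lemma compMzl a b c (f : Defs.Hom (p:=C) b c) (h : Defs.Hom (p:=C) a b) z : mcomp (f *~ z) h = mcomp f h *~ z.
Proof. by case: z => n; rewrite ?NegzE ?mulrNz -!pmulrn ?compNl compMnl. Qed.
Lemma compMzr a b c (f : Defs.Hom (p:=C) b c) (h : Defs.Hom (p:=C) a b) z : mcomp f (h *~ z) = mcomp f h *~ z.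
Proof. by case: z => n; rewrite ?NegzE ?mulrNz -!pmulrn ?compNr compMnr. Qed.

Lemma kappa1 p i : (i <= p)%N ->
  mcomp (kappa M p.+1) (degen M p i) =
  if i == 0%N then 0 else - mcomp (degen M p i.-1) (kappa M p).
Proof.
move=> Hi /=.
rewrite compMzl compBl -!Defs.compA (@idA p i Hi).
case: eqP => [->|/eqP i0].
  by rewrite Defs.compA (idB p.+1) Defs.comp1f idB Defs.compf1 subrr mul0rz.
rewrite Defs.compA (@idC _ i); last by rewrite lt0n i0 /= (leq_trans Hi).
case: p Hi => [|p] Hi; first by move: i0; rewrite -leqn0 Hi.
rewrite (@idC _ i); last by rewrite lt0n i0.
rewrite !Defs.compA (@idA _ i.-1); last by rewrite -ltnS prednK // lt0n.
rewrite -!Defs.compA -compBr /= compMzr -mulrNz; congr (_ *~ _).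
by rewrite exprS mulN1r.
Qed.


Lemma chain_cons m l' : forall x, path (fun a b => (b < a)%N) x l' ->
  (x < size l' + m + 1)%N ->
  mcomp (kappa M (size (x::l') + m)) (degen_chain M id m (x::l')) =
  if last x l' == 0%N then 0
  else mcomp (degen_chain M predn m (x::l')) (kappa M m) *~ (-1)^+(size l').+1.
Proof.
elim: l' => [|y l IH] x Hp Hx.
- rewrite /= Defs.compA (@kappa1 (0 + m) x); last by rewrite addn1 ltnS in Hx.
  case: eqP => _; first by rewrite comp0l.
  by rewrite compNl !Defs.compf1 expr1 mulrN1z.
- move: Hp => /= /andP [Hyx Hp].
  rewrite Defs.compA (@kappa1 (size (y :: l) + m) x); last by rewrite addn1 ltnS in Hx.
  have -> : (x == 0%N) = false by case: x Hyx {Hx}.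
  rewrite compNl -Defs.compA IH //; last by rewrite (leq_trans Hyx) // -ltnS -addn1 /= addSn.
  case: eqP => _; first by rewrite comp0r oppr0.
  rewrite compMzr Defs.compA -mulrNz; congr (_ *~ _); by rewrite [in RHS]exprS mulN1r.
Qed.
End Cat.
End CatM.
Import CatM.

Lemma last_iota a c : last a (iota a.+1 c) = (a + c)%N.
Proof. elim: c a => [|c IH] a /=; first by rewrite addn0. by rewrite IH addSnnS. Qed.

Lemma path_iota (r : rel nat) c : forall a,
  (forall j, (a <= j)%N -> (j < a + c)%N -> r j j.+1) -> path r a (iota a.+1 c).
Proof.
elim: c => [//|c IH] a H /=; apply/andP; split.
  by apply: H; rewrite ?leqnn ?addnS ?ltnS ?leq_addr.
apply: IH => j Hj Hjc; apply: H; first exact: ltnW.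
by rewrite addnS -addSn.
Qed.

Theorem mainTheorem12 (C : preadditive) (M : duplicial C) (n k : nat)
  (i : nat -> nat) :
  (1 <= n)%N -> (1 <= k <= n)%N ->
  (forall j : nat, (1 <= j < k)%N -> (i j.+1 < i j)%N) ->
  (i 1 < n)%N ->
  let l := [seq i j | j <- iota 1 k] in
  mcomp (kappa M (size l + (n - k))) (degen_chain M id (n - k) l) =
  (if i k == 0%N then 0
   else (mcomp (degen_chain M predn (n - k) l) (kappa M (n - k))) *~ ((-1) ^+ k))%R.
Proof.
move=> Hn /andP [Hk1 Hkn] Hdec Hi1.
case: k Hk1 Hkn Hdec => // k _ Hkn Hdec l.
have E : l = i 1 :: [seq i j | j <- iota 2 k] by [].
rewrite E (@chain_cons C M (n - k.+1) _ (i 1)).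
- by rewrite size_map size_iota last_map last_iota.
- rewrite path_map; apply: path_iota => j Hj Hjk; apply: Hdec.
  by rewrite Hj.
- rewrite size_map size_iota addn1 -addSn subnKC //.
Qed.
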